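(* Let $p\in(0,1)$. Let $B_p(x)=\sum_{n\ge0}(1-p)^{\binom{n+1}{2}}x^n$, and let $h_m=[x^m]\,\frac{1}{B_p(x)}$ denote the coefficient of $x^m$ in the power series $1/B_p(x)$. (a) For every $n\ge1$, \[ h_n=\sum_{j=1}^{n}(-1)^j\sum_{\mathbf a\in\mathcal C_{n,j}}(1-p)^{\sum_{i=1}^j\binom{a_i+1}{2}}. \] (b) For $n\ge1$, let $X_n$ be the maximum weight of a directed path from $1$ to $n$ in the transitive tournament on $\{1,\ldots,n\}$ with independent $\mathrm{Bernoulli}(p)$ edge weights, and let $g(n)=1+\mathbb{E}[X_n]$. Then \[ g(n)=\sum_{m=0}^{n-1}(n-m)h_m=\sum_{m=0}^{n-1}(n-m)\sum_{\mathbf a\in\mathcal C_m}(-1)^{l(\mathbf a)}(1-p)^{\sum_{i=1}^{l(\mathbf a)}\binom{a_i+1}{2}}, \] and \[ g(n)=\sum_{m=0}^{n-1}\sum_{j=0}^{m}\sum_{k=0}^{j}(-1)^k\sum_{\mathbf a\in\mathcal C_{j,k}}(1-p)^{\sum_{i=1}^k\binom{a_i+1}{2}}. \]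
   Context: For integers $n\ge0$ and $i\ge0$, an $i$-composition of $n$ is a tuple $\mathbf a=(a_1,\ldots,a_i)$ of positive integers with $a_1+\cdots+a_i=n$. The set of all $i$-compositions of $n$ is $\mathcal C_{n,i}$. For $n\ge1$, $\mathcal C_n=\bigcup_{i=1}^n\mathcal C_{n,i}$ is the set of all compositions of $n$. Convention: $\mathcal C_{0,0}=\mathcal C_0$ consists of the single empty composition, of length $0$, with empty exponent sum $0$ (so it contributes $1$); for $j\ge1$, $\mathcal C_{j,0}=\emptyset$. The length of $\mathbf a\in\mathcal C_{n,i}$ is $l(\mathbf a)=i$. The transitive tournament on $\{1,\ldots,n\}$ has a directed edge $(i,j)$ for each $1\le i<j\le n$. Its edges carry independent weights in $\{0,1\}$, each equal to $1$ with probability $p$. $X_n$ is the maximum, over directed paths from $1$ to $n$, of the sum of the edge weights along the path. *)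

(* Defs.v *)
From HB Require Import structures.
From mathcomp Require Import all_boot all_order all_algebra.
Set Implicit Arguments. Unset Strict Implicit. Unset Printing Implicit Defensive.
Import Order.TTheory GRing.Theory Num.Theory.
Local Open Scope ring_scope.

Definition Bcoef (R : realFieldType) (p : R) (n : nat) : R :=
  (1 - p) ^+ 'C(n.+1, 2).

(* h is the coefficient sequence of the formal power series 1/B, i.e. the
   Cauchy product of b and h is the series 1 (coefficients [m == 0]). *)
Definition is_inverse_series (R : realFieldType) (b h : nat -> R) : Prop :=
  forall m : nat, \sum_(k < m.+1) b k * h (m - k)%N = (m == 0%N)%:R.

(* i-compositions of n: tuples (a_1..a_i) of positive integers summing to n.
   Every part is <= n, so they are represented as finite functions
   'I_i -> 'I_n.+1 (a bijective encoding of C_{n,i}). *)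
Definition is_composition (n i : nat) (a : {ffun 'I_i -> 'I_n.+1}) : bool :=
  [forall k, (0 < (a k : nat))%N] && ((\sum_(k < i) (a k : nat))%N == n).

Definition compW (R : realFieldType) (p : R) (n i : nat) : R :=
  \sum_(a : {ffun 'I_i -> 'I_n.+1} | is_composition a)
     (1 - p) ^+ (\sum_(k < i) 'C((a k : nat).+1, 2))%N.

(* sum over a in C_m (= disjoint union of C_{m,i}, i <= m; C_0 = C_{0,0}) of
   (-1)^{l(a)} (1-p)^(sum binom(a_k+1,2)) *)
Definition compSum (R : realFieldType) (p : R) (m : nat) : R :=
  \sum_(i < m.+1) (-1) ^+ i * compW p m i.

(* Edges (i,j), i < j, of the transitive tournament on n vertices
   (vertex k : 'I_n stands for vertex k+1 of the paper). *)
Definition edge (n : nat) := {e : 'I_n * 'I_n | (e.1 < e.2)%N}.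

Definition ewt (n : nat) (w : {ffun edge n -> bool}) (u v : 'I_n) : nat :=
  match @insub _ (fun e : 'I_n * 'I_n => (e.1 < e.2)%N) (edge n) (u, v) with
  | Some e => nat_of_bool (w e)
  | None => 0%N
  end.

(* A directed path from the first to the last vertex in the transitive
   tournament is determined by its vertex set S (containing both endpoints),
   visited in increasing order. *)
Definition is_path_set (n : nat) (S : {set 'I_n}) : bool :=
  [forall k : 'I_n, ((k : nat) == 0%N) || ((k : nat) == n.-1) ==> (k \in S)].

Definition path_weight (n : nat) (w : {ffun edge n -> bool}) (S : {set 'I_n}) : nat :=
  let s := sort (fun x y : 'I_n => (x <= y)%N) (enum S) in
  (\sum_(e <- zip s (behead s)) ewt w e.1 e.2)%N.

Definition Xn (n : nat) (w : {ffun edge n -> bool}) : nat :=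
  (\max_(S : {set 'I_n} | is_path_set S) path_weight w S)%N.

Definition EXn (R : realFieldType) (p : R) (n : nat) : R :=
  \sum_(w : {ffun edge n -> bool})
     (\prod_(e : edge n) (if w e then p else 1 - p)) * (Xn w)%:R.

Definition gfun (R : realFieldType) (p : R) (n : nat) : R := 1 + EXn p n.

(* Main.v *)
Require Import Defs.
From HB Require Import structures.
From mathcomp Require Import all_boot all_order all_algebra.
From mathcomp Require Import zify ring lra.

Module PartA.
Import Order.TTheory GRing.Theory Num.Theory.
Local Open Scope ring_scope.

Definition consf (T : finType) i (x : T) (g : {ffun 'I_i -> T}) : {ffun 'I_i.+1 -> T} :=
  [ffun k => if unlift ord0 k is Some k' then g k' else x].

Arguments consf {T i}.

Lemma big_ffunS (R : nmodType) (T : finType) i (F : {ffun 'I_i.+1 -> T} -> R) :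
  \sum_f F f = \sum_x \sum_g F (consf x g).
Proof.
rewrite pair_big /=.
rewrite (reindex (fun xg : T * {ffun 'I_i -> T} => consf xg.1 xg.2)) //.
apply: onW_bij.
exists (fun f : {ffun 'I_i.+1 -> T} => (f ord0, [ffun k => f (lift ord0 k)])).
- move=> [x g] /=; rewrite /consf ffunE unlift_none; congr pair.
  by apply/ffunP => k; rewrite !ffunE liftK.
- move=> f /=; apply/ffunP => k; rewrite /consf !ffunE.
  by case: unliftP => [j ->|->]; rewrite ?ffunE.
Qed.

Fixpoint cw (R : realFieldType) (p : R) (i n : nat) : R :=
  match i with
  | 0 => (n == 0)%:R
  | i'.+1 => \sum_(a < n) Bcoef p a.+1 * @cw R p i' (n - a.+1)
  end.

Arguments cw {R}.

Lemma compW_gen (R : realFieldType) (p : R) (M i n : nat) : (n < M)%N ->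
  \sum_(a : {ffun 'I_i -> 'I_M} | [forall k, (0 < (a k : nat))%N] && ((\sum_(k < i) (a k : nat))%N == n))
     (1 - p) ^+ (\sum_(k < i) 'C((a k : nat).+1, 2))%N = cw p i n.
Proof.
elim: i n => [|i IH] n ltnM /=.
- have a0 : 'I_M by exact: (Ordinal ltnM).
  rewrite (eq_bigl (fun _ => n == 0%N)); last first.
    move=> a; rewrite big_ord0 eq_sym andb_idl // => _.
    by apply/forallP => -[].
  rewrite big_mkcond /=.
  rewrite (eq_bigr (fun _ => (n == 0%N)%:R)); last first.
    by move=> a _; rewrite big_ord0 expr0; case: (n == 0%N).
  rewrite sumr_const card_ffun. have -> : #|'I_0| = 0%N by rewrite card_ord. by rewrite expn0 mulr1n.
- rewrite big_mkcond big_ffunS /=.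
  rewrite (eq_bigr (fun x : 'I_M => if (0 < (x : nat))%N && (x <= n)%N then Bcoef p x * cw p i (n - x) else 0)); last first.
    move=> x _.
    have E : forall g : {ffun 'I_i -> 'I_M},
       (\sum_(k < i.+1) (consf x g k : nat))%N = (x + \sum_(k < i) (g k : nat))%N.
      by move=> g; rewrite big_ord_recl /consf ffunE unlift_none; congr addn; apply: eq_bigr => k _; rewrite ffunE liftK.
    have E2 : forall g : {ffun 'I_i -> 'I_M},
       (\sum_(k < i.+1) 'C((consf x g k : nat).+1, 2))%N = ('C(x.+1, 2) + \sum_(k < i) 'C((g k : nat).+1, 2))%N.
      by move=> g; rewrite big_ord_recl /consf ffunE unlift_none; congr addn; apply: eq_bigr => k _; rewrite ffunE liftK.
    have E3 : forall g : {ffun 'I_i -> 'I_M},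
       [forall k, (0 < (consf x g k : nat))%N] = (0 < (x : nat))%N && [forall k, (0 < (g k : nat))%N].
      move=> g; apply/forallP/andP => [H|[H1 /forallP H2] k].
        split; first by have := H ord0; rewrite /consf ffunE unlift_none.
        by apply/forallP => k; have := H (lift ord0 k); rewrite /consf ffunE liftK.
      by rewrite /consf ffunE; case: unlift.
    case: ifP => [/andP [x0 xn]|Hx].
    + rewrite -(IH (n - x)%N); last by lia.
      rewrite mulr_sumr [RHS]big_mkcond; apply: eq_bigr => g _.
      rewrite E E2 E3 x0 /= exprD /Bcoef.
      have -> : (x + \sum_(k < i) (g k : nat) == n)%N = ((\sum_(k < i) (g k : nat))%N == (n - x)%N) by lia.
      by case: ifP => //; rewrite mulr0.
    + apply: big1 => g _; rewrite E E3.
      case: ifP => // /andP [/andP [x0 _] /eqP Hs]; move: Hx; rewrite x0 /=; lia.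
  rewrite -(big_mkord xpredT (fun x => if (0 < x)%N && (x <= n)%N then Bcoef p x * cw p i (n - x) else 0)).
  rewrite (big_cat_nat _ (n := n.+1)) //=.
  rewrite [X in _ + X]big1_seq ?addr0; last first.
    move=> x /andP [_]; rewrite mem_index_iota => /andP [H _].
    by case: ifP => // /andP [_ H']; lia.
  rewrite big_nat_recl // /= big_mkord add0r; apply: eq_bigr => a _.
  by rewrite ltn_ord.
Qed.

Lemma compW_cw (R : realFieldType) (p : R) n i : compW p n i = cw p i n.
Proof. by rewrite /compW /is_composition compW_gen. Qed.

Lemma cw_gt (R : realFieldType) (p : R) i n : (n < i)%N -> cw p i n = 0.
Proof.
elim: i n => [|i IH] n //= Hn.
apply: big1 => a _; rewrite IH ?mulr0 //.
have := ltn_ord a; lia.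
Qed.

Lemma Bcoef0 (R : realFieldType) (p : R) : Bcoef p 0 = 1.
Proof. by rewrite /Bcoef. Qed.

Lemma compSum_ext (R : realFieldType) (p : R) n K : (n < K)%N ->
  compSum p n = \sum_(i < K) (-1) ^+ i * cw p i n.
Proof.
move=> HK; rewrite /compSum.
rewrite (eq_bigr (fun i : 'I_n.+1 => (-1) ^+ i * cw p i n)); last by move=> i _; rewrite compW_cw.
rewrite (big_ord_widen K (fun i => (-1) ^+ i * cw p i n)) // big_mkcond.
apply: eq_bigr => i _; case: ifP => // /negbT; rewrite -leqNgt => H.
by rewrite cw_gt ?mulr0.
Qed.

Lemma conv_cS (R : realFieldType) (p : R) m :
  \sum_(k < m.+1) Bcoef p k * compSum p (m - k) = (m == 0%N)%:R.
Proof.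
case: m => [|m].
  by rewrite big_ord1 Bcoef0 mul1r /compSum big_ord1 compW_cw /= mul1r.
rewrite big_ord_recl Bcoef0 mul1r subn0 /=.
rewrite (@compSum_ext _ p _ m.+2) // big_ord_recl /= mulr0 add0r.
rewrite (eq_bigr (fun i : 'I_m.+1 => - \sum_(a < m.+1) Bcoef p a.+1 * ((-1) ^+ i * cw p i (m - a)))); last first.
  move=> i _; have -> : bump 0 i = i.+1 by [].
  rewrite exprS mulN1r mulNr mulr_sumr; congr (- _); apply: eq_bigr => a _.
  rewrite subSS; ring.
rewrite sumrN exchange_big /= addrC -sumrB; apply: big1 => a _.
have -> : bump 0 a = a.+1 by [].
rewrite subSS (@compSum_ext _ p _ m.+1); last by have := ltn_ord a; lia.
by rewrite mulr_sumr subrr.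
Qed.

Lemma inv_unique (R : realFieldType) (b x y : nat -> R) : b 0%N = 1 ->
  is_inverse_series b x -> is_inverse_series b y -> forall n, x n = y n.
Proof.
move=> b0 Hx Hy n; elim/ltn_ind: n => n IH.
have Ex := Hx n; have Ey := Hy n.
case: n IH Ex Ey => [|n] IH Ex Ey.
  by move: Ex Ey; rewrite !big_ord1 b0 !mul1r => -> ->.
rewrite big_ord_recl b0 mul1r subn0 in Ex.
rewrite big_ord_recl b0 mul1r subn0 in Ey.
rewrite -[x _](addrK (\sum_(i < n.+1) b (bump 0 i) * x (n.+1 - bump 0 i)%N)) Ex.
rewrite -[y _](addrK (\sum_(i < n.+1) b (bump 0 i) * y (n.+1 - bump 0 i)%N)) Ey.
congr (_ - _); apply: eq_bigr => i _.
by rewrite IH //; have := ltn_ord i; rewrite /bump /=; lia.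
Qed.

Lemma h_compSum (R : realFieldType) (p : R) h :
  is_inverse_series (Bcoef p) h -> forall n, h n = compSum p n.
Proof.
move=> H; apply: (@inv_unique R (Bcoef p) h (compSum p) (@Bcoef0 R p) H) => m.
exact: conv_cS.
Qed.

End PartA.
Import PartA.

Module PartB.
Import Order.TTheory GRing.Theory Num.Theory.
Set Implicit Arguments. Unset Strict Implicit. Unset Printing Implicit Defensive.
Local Open Scope ring_scope.

Definition prb (R : realFieldType) (p : R) (b : bool) : R := if b then p else 1 - p.
Definition Ex (R : realFieldType) (p : R) (I : finType) (F : {ffun I -> bool} -> R) : R :=
  \sum_(w : {ffun I -> bool}) (\prod_i prb p (w i)) * F w.


Lemma Ex_prod (R : realFieldType) (p : R) (I : finType) (f : I -> bool -> R) :
  Ex p (fun c => \prod_i f i (c i)) = \prod_i (p * f i true + (1 - p) * f i false).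
Proof.
rewrite /Ex.
rewrite (eq_bigr (fun i => \sum_(b : bool) prb p b * f i b)); last first.
  by move=> i _; rewrite big_bool.
rewrite bigA_distr_bigA; apply: eq_bigr => w _.
by rewrite big_split.
Qed.

Lemma sum_prod1 (R : realFieldType) (p : R) (I : finType) :
  \sum_(w : {ffun I -> bool}) \prod_i prb p (w i) = 1.
Proof.
rewrite -(bigA_distr_bigA (fun (i : I) (b : bool) => prb p b)).
apply: big1 => i _; rewrite big_bool /prb /=; ring.
Qed.

Lemma Ex_const (R : realFieldType) (p : R) (I : finType) (c : R) :
  Ex p (fun _ : {ffun I -> bool} => c) = c.
Proof. by rewrite /Ex -mulr_suml sum_prod1 mul1r. Qed.

Lemma Ex_add (R : realFieldType) (p : R) (I : finType) (F G : {ffun I -> bool} -> R) :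
  Ex p (fun w => F w + G w) = Ex p F + Ex p G.
Proof. by rewrite /Ex -big_split; apply: eq_bigr => w _; rewrite mulrDr. Qed.

Lemma Ex_scale (R : realFieldType) (p : R) (I : finType) (a : R) (F : {ffun I -> bool} -> R) :
  Ex p (fun w => a * F w) = a * Ex p F.
Proof. by rewrite /Ex mulr_sumr; apply: eq_bigr => w _; ring. Qed.

Lemma Ex_sum (R : realFieldType) (p : R) (I : finType) (J : Type) (s : seq J) (P : pred J)
   (F : J -> {ffun I -> bool} -> R) :
  Ex p (fun w => \sum_(j <- s | P j) F j w) = \sum_(j <- s | P j) Ex p (F j).
Proof. by rewrite /Ex exchange_big /=; apply: eq_bigr => w _; rewrite mulr_sumr. Qed.

Lemma Ex_ext (R : realFieldType) (p : R) (I : finType) (F G : {ffun I -> bool} -> R) :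
  (forall w, F w = G w) -> Ex p F = Ex p G.
Proof. by move=> H; rewrite /Ex; apply: eq_bigr => w _; rewrite H. Qed.

Definition mrg (I : finType) (A : pred I) (w c : {ffun I -> bool}) : {ffun I -> bool} :=
  [ffun i => if A i then c i else w i].

Lemma Ex_merge (R : realFieldType) (p : R) (I : finType) (A : pred I) (F : {ffun I -> bool} -> R) :
  Ex p F = Ex p (fun w => Ex p (fun c => F (mrg A w c))).
Proof.
rewrite /Ex.
under [RHS]eq_bigr do rewrite mulr_sumr.
rewrite pair_big /=.
pose phi := fun x : {ffun I -> bool} * {ffun I -> bool} => (mrg A x.1 x.2, mrg A x.2 x.1).
have phiK : cancel phi phi.
  move=> [w c]; rewrite /phi /mrg /=; congr pair; apply/ffunP => i; rewrite !ffunE;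
  by case: (A i).
rewrite (reindex_inj (can_inj phiK)) /=.
have E : forall w c, \prod_i prb p (mrg A w c i) * \prod_i prb p (mrg A c w i) =
                     \prod_i prb p (w i) * \prod_i prb p (c i).
  move=> w c; rewrite -!big_split; apply: eq_bigr => i _; rewrite /mrg !ffunE.
  by case: (A i) => //=; rewrite mulrC.
have mmK : forall w c, mrg A (mrg A w c) (mrg A c w) = w.
  move=> w c; apply/ffunP => i; rewrite /mrg !ffunE; by case: (A i).
under [RHS]eq_bigr do rewrite mulrA E mmK.
rewrite -(pair_big xpredT xpredT (fun (w c : {ffun I -> bool}) => \prod_i prb p (w i) * \prod_i prb p (c i) * F w)) /=.
apply: eq_bigr => w _.
rewrite -mulr_suml -mulr_sumr.
by rewrite sum_prod1 mulr1.
Qed.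

End PartB.
Import PartB.

Module PartC.
Set Implicit Arguments. Unset Strict Implicit. Unset Printing Implicit Defensive.

Fixpoint Dk (W : nat -> nat -> nat) (k v : nat) : nat :=
  match k with
  | 0 => 0
  | k'.+1 => if v is v'.+1 then \max_(u < v) (Dk W k' u + W u v) else 0
  end.

Definition D W v := Dk W v v.

Lemma Dk_SS W k v : Dk W k.+1 v.+1 = \max_(u < v.+1) (Dk W k u + W u v.+1).
Proof. by []. Qed.

Lemma Dk_S W k v : v <= k -> Dk W k.+1 v = Dk W k v.
Proof.
elim: k v => [|k IH] [|v] // Hv.
rewrite !Dk_SS; apply: eq_bigr => u _; rewrite IH //; have := ltn_ord u; lia.
Qed.

Lemma Dk_D W k v : v <= k -> Dk W k v = D W v.
Proof.
move=> /subnKC <-; rewrite /D; elim: (k - v) => [|m IH]; first by rewrite addn0.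
by rewrite addnS Dk_S ?IH // leq_addr.
Qed.

Lemma D_S W v : D W v.+1 = \max_(u < v.+1) (D W u + W u v.+1).
Proof.
rewrite /D Dk_SS; apply: eq_bigr => u _; rewrite Dk_D //; have := ltn_ord u; lia.
Qed.

Lemma D0 W : D W 0 = 0.
Proof. by []. Qed.

Lemma D_local W W' v : (forall a b, b <= v -> W a b = W' a b) -> D W v = D W' v.
Proof.
elim/ltn_ind: v => -[|v] IH H //.
rewrite !D_S; apply: eq_bigr => u _.
have Hu := ltn_ord u.
rewrite H // (IH u) //.
move=> a b Hb; apply: H; lia.
Qed.

Lemma D_ge W u v : u < v -> D W u + W u v <= D W v.
Proof.
case: v => // v Hu; rewrite D_S.
exact: (@leq_bigmax _ (fun i : 'I_v.+1 => D W i + W i v.+1) (Ordinal Hu)).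
Qed.

Lemma D_mono W u v : u <= v -> D W u <= D W v.
Proof.
move=> /subnKC <-; elim: (v - u) => [|m IH]; first by rewrite addn0.
apply: leq_trans IH _; rewrite addnS.
apply: leq_trans (D_ge W _) ; [exact: leq_addr | exact: ltnSn].
Qed.

Definition inc W v := [exists u : 'I_v.+1, (D W u == D W v) && (W u v.+1 == 1)].
Definition Lp W v := \sum_(u < v.+1) (D W u == D W v).

Lemma D_inc W v : (forall a b, W a b <= 1) -> D W v.+1 = D W v + inc W v.
Proof.
move=> W1; apply/eqP; rewrite eqn_leq; apply/andP; split.
- rewrite D_S; apply/bigmax_leqP => u _.
  have Hu : D W u <= D W v by apply: D_mono; rewrite -ltnS.
  rewrite /inc; case: existsP => [_|Hn].
  + by have := W1 u v.+1; rewrite /=; lia.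
  + have H : ~~ ((D W u == D W v) && (W u v.+1 == 1)) by apply/negP => H; apply: Hn; exists u.
    have W1u := W1 u v.+1; rewrite /= addn0.
    case: eqP => [E|Ne] /= in H *.
    * by move: H; rewrite E; case: eqP => //= Hw _; lia.
    * by lia.
- rewrite /inc; case: existsP => [[u /andP [/eqP Hu /eqP Hw]]|_].
  + by have := D_ge W (ltn_ord u); rewrite Hu Hw addn1.
  + by have := D_ge W (ltnSn v); lia.
Qed.

Lemma Lp_ge1 W v : 1 <= Lp W v.
Proof. by rewrite /Lp big_ord_recr /= eqxx; lia. Qed.

Lemma Lp_le W v : Lp W v <= v.+1.
Proof.
rewrite /Lp; apply: (@leq_trans (\sum_(u < v.+1) 1)).
  by apply: leq_sum => i _; exact: leq_b1.
by rewrite sum_nat_const card_ord muln1.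
Qed.

Lemma Lp_inc W v : (forall a b, W a b <= 1) -> Lp W v.+1 = if inc W v then 1 else (Lp W v).+1.
Proof.
move=> W1; rewrite /Lp big_ord_recr /= eqxx D_inc //.
case: (inc W v) => /=.
- rewrite big1 //= => u _.
  have : D W u <= D W v by apply: D_mono; rewrite -ltnS.
  by case: eqP => // E; lia.
- by rewrite addn0 addn1; congr S; apply: eq_bigr => u _; rewrite addn0.
Qed.

End PartC.
Import PartC.

Module PartE.
Set Implicit Arguments. Unset Strict Implicit. Unset Printing Implicit Defensive.

Definition pwl (W : nat -> nat -> nat) (t : seq nat) : nat :=
  \sum_(e <- zip t (behead t)) W e.1 e.2.

Lemma pwl_cons2 W x a s : pwl W [:: x, a & s] = W x a + pwl W (a :: s).
Proof. by rewrite /pwl /= big_cons. Qed.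

Lemma pwl_rcons W x s y : pwl W (x :: rcons s y) = pwl W (x :: s) + W (last x s) y.
Proof.
elim: s x => [|a s IH] x.
  by rewrite /pwl /= big_seq1 big_nil add0n.
by rewrite rcons_cons pwl_cons2 IH pwl_cons2 addnA.
Qed.

Lemma pwl_upper W s : path ltn 0 s -> pwl W (0 :: s) <= D W (last 0 s).
Proof.
elim/last_ind: s => [|s y IH]; first by rewrite /pwl /= big_nil.
rewrite rcons_path => /andP [Hp Hl].
rewrite pwl_rcons last_rcons.
apply: leq_trans (D_ge W Hl); rewrite leq_add2r; exact: IH.
Qed.

Lemma pwl_achieve W v : exists s, [/\ path ltn 0 s, last 0 s = v & pwl W (0 :: s) = D W v].
Proof.
elim/ltn_ind: v => -[|v] IH.
  by exists [::]; rewrite /pwl /= big_nil.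
have cpos : 0 < #|'I_v.+1| by rewrite card_ord.
have [u Hu] := @eq_bigmax _ (fun u : 'I_v.+1 => D W u + W u v.+1) cpos.
have [s [Hp Hl Hw]] := IH u (ltn_ord u).
exists (rcons s v.+1); split.
- by rewrite rcons_path Hp Hl /= ltn_ord.
- by rewrite last_rcons.
- by rewrite pwl_rcons Hw Hl D_S Hu.
Qed.

Lemma path_last (x : nat) s : path ltn x s -> forall y, y \in x :: s -> y <= last x s.
Proof.
elim: s x => [|a s IH] x /=.
  by move=> _ y; rewrite inE => /eqP ->.
move=> /andP [xa Hp] y; rewrite inE => /orP [/eqP ->|Hy].
  by have := IH a Hp a (mem_head _ _); lia.
exact: IH.
Qed.

Lemma path_head (x : nat) s : path ltn x s -> forall y, y \in s -> x < y.
Proof.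
move=> Hp y Hy; have := order_path_min ltn_trans Hp.
by move/allP => /(_ y Hy).
Qed.

Lemma sorted_leq_ltn (s : seq nat) : sorted leq s -> uniq s -> sorted ltn s.
Proof.
case: s => // x s /=; elim: s x => [|a s IH] x //=.
move=> /andP [xa Hp] /andP [xn /andP [an us]].
rewrite inE negb_or in xn; case/andP: xn => xa' xs.
rewrite IH ?Hp ?an ?us // andbT; rewrite ltn_neqAle xa andbT; exact: xa'.
Qed.

Definition Wn N (w : {ffun edge N.+1 -> bool}) (a b : nat) : nat :=
  ewt w (inord a) (inord b).

Lemma Wn_le1 N (w : {ffun edge N.+1 -> bool}) a b : Wn w a b <= 1.
Proof. rewrite /Wn /ewt; case: insub => // e; exact: leq_b1. Qed.

Lemma path_weight_pwl N (w : {ffun edge N.+1 -> bool}) (S : {set 'I_N.+1}) :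
  path_weight w S = pwl (Wn w) (sort leq (map val (enum S))).
Proof.
rewrite /path_weight /pwl sort_map behead_map.
set s := sort _ (enum S).
have -> : zip [seq val i | i <- s] [seq val i | i <- behead s] =
          [seq (val e.1, val e.2) | e <- zip s (behead s)].
  elim: s (behead s) => [|a s IH] [|b t] //=.
  by rewrite IH.
rewrite big_map; apply: eq_bigr => e _ /=.
by rewrite /Wn !inord_val.
Qed.

Lemma Xn_D N (w : {ffun edge N.+1 -> bool}) : Xn w = D (Wn w) N.
Proof.
apply/eqP; rewrite eqn_leq; apply/andP; split.
- apply/bigmax_leqP => S HS.
  rewrite path_weight_pwl.
  set t := sort leq _.
  have tsort : sorted ltn t.
    apply: sorted_leq_ltn; first exact: (sort_sorted leq_total).
    by rewrite sort_uniq map_inj_uniq ?enum_uniq //; exact: val_inj.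
  have memt : forall x, x \in t = [exists y : 'I_N.+1, (y \in S) && (val y == x)].
    move=> x; rewrite mem_sort; apply/mapP/existsP => [[y Hy ->]|[y /andP [Hy /eqP <-]]].
      by exists y; rewrite -mem_enum Hy eqxx.
    by exists y; rewrite ?mem_enum.
  have Hin : forall x, x < N.+1 -> (x == 0) || (x == N) -> x \in t.
    move=> x Hx H; rewrite memt; apply/existsP; exists (Ordinal Hx); rewrite eqxx andbT.
    by move/forallP: HS => /(_ (Ordinal Hx)) /implyP; apply.
  have Hlt : forall x, x \in t -> x < N.+1.
    by move=> x; rewrite memt => /existsP [y /andP [_ /eqP <-]]; exact: ltn_ord.
  case Et : t tsort Hin Hlt => [|x s] tsort' Hin' Hlt'.
    by have := Hin' 0 (ltn0Sn _); rewrite eqxx /= => /(_ isT).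
  have x0 : x = 0.
    have := Hin' 0 (ltn0Sn _); rewrite eqxx /= => /(_ isT); rewrite inE => /orP [/eqP -> //|H].
    by have := path_head tsort' H.
  subst x.
  have lN : last 0 s = N.
    apply/eqP; rewrite eqn_leq; apply/andP; split.
      by rewrite -ltnS; apply: Hlt'; exact: mem_last.
    by apply: path_last tsort' _ _; apply: Hin' => //; rewrite eqxx orbT.
  by have := pwl_upper (Wn w) tsort'; rewrite lN.
- have [s [Hp Hl Hw]] := pwl_achieve (Wn w) N.
  pose S := [set x : 'I_N.+1 | val x \in 0 :: s].
  have HS : is_path_set S.
    apply/forallP => k; apply/implyP => Hk; rewrite in_set.
    change (nat_of_ord k \in 0 :: s); case/orP: Hk => /eqP ->; first exact: mem_head.
    by rewrite /= -Hl mem_last.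
  apply: leq_trans (leq_bigmax_cond _ HS).
  rewrite path_weight_pwl -Hw.
  have Hall : forall y, y \in 0 :: s -> y < N.+1.
    by move=> y Hy; have := path_last Hp Hy; rewrite Hl.
  have -> : sort leq [seq val i | i <- enum S] = 0 :: s => //.
  apply: (irr_sorted_eq ltn_trans ltnn).
  + apply: sorted_leq_ltn; first exact: (sort_sorted leq_total).
    by rewrite sort_uniq map_inj_uniq ?enum_uniq //; exact: val_inj.
  + exact: Hp.
  + move=> x; rewrite mem_sort; apply/mapP/idP => [[y Hy ->]|Hx].
      by move: Hy; rewrite mem_enum inE.
    exists (Ordinal (Hall x Hx)) => //.
    by rewrite mem_enum inE.
Qed.

End PartE.
Import PartE.

Module PartF.
Set Implicit Arguments. Unset Strict Implicit. Unset Printing Implicit Defensive.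
Import Order.TTheory GRing.Theory Num.Theory.
Local Open Scope ring_scope.

Lemma ewt_edge n (c : {ffun edge n -> bool}) (e : edge n) : ewt c (val e).1 (val e).2 = c e.
Proof. by rewrite /ewt -surjective_pairing valK. Qed.

Lemma ewt_one n (c : {ffun edge n -> bool}) a b :
  ewt c a b = 1%N -> exists2 e : edge n, val e = (a, b) & c e.
Proof.
rewrite /ewt; case: insubP => [e _ He|_] //.
by exists e => //; case: (c e) H.
Qed.

Definition At N (t : nat) := [pred e : edge N.+1 | ((val e).2 : nat) == t].

Lemma ewt_merge N t (w c : {ffun edge N.+1 -> bool}) (a b : 'I_N.+1) :
  ewt (mrg (At N t) w c) a b = if (b : nat) == t then ewt c a b else ewt w a b.
Proof.
rewrite /ewt; case: insubP => [e _ He|_]; last by case: ifP.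
by rewrite /mrg ffunE /= He /=; case: ifP.
Qed.

Lemma Wn_merge N t (w c : {ffun edge N.+1 -> bool}) a b : (b <= N)%N ->
  Wn (mrg (At N t) w c) a b = if b == t then Wn c a b else Wn w a b.
Proof. by move=> Hb; rewrite /Wn ewt_merge inordK. Qed.

Lemma prod_bool (R : realFieldType) (I : finType) (b : I -> bool) :
  \prod_i ((b i)%:R : R) = ([forall i, b i])%:R.
Proof.
case: forallP => [H|/forallP]; first by apply: big1 => i _; rewrite H.
rewrite negb_forall => /existsP [i0 Hi0].
by rewrite (bigD1 i0) //= (negbTE Hi0) mul0r.
Qed.

Lemma card_Q N t (P : pred nat) : (0 < t <= N)%N ->
  #|[pred e : edge N.+1 | (((val e).2 : nat) == t) && P (val e).1]| = (\sum_(u < t) P u)%N.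
Proof.
move=> /andP [t0 tN].
pose psi := fun e : edge N.+1 => (val e).1.
have inj : {in [set e : edge N.+1 | (((val e).2 : nat) == t) && P (val e).1] &, injective psi}.
  move=> e1 e2; rewrite !inE => /andP [/eqP H1 _] /andP [/eqP H2 _] H.
  apply: val_inj; rewrite [val e1]surjective_pairing [val e2]surjective_pairing.
  congr pair; first exact: H.
  by apply: ord_inj; rewrite H1 H2.
have -> : #|[pred e : edge N.+1 | (((val e).2 : nat) == t) && P (val e).1]| =
          #|[set e : edge N.+1 | (((val e).2 : nat) == t) && P (val e).1]|.
  by apply: eq_card => e; rewrite inE.
rewrite -(card_in_imset inj).
have -> : psi @: [set e : edge N.+1 | (((val e).2 : nat) == t) && P (val e).1] =
          [set u : 'I_N.+1 | ((u : nat) < t)%N && P u].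
  apply/setP => u; rewrite inE; apply/imsetP/idP.
  - move=> [e]; rewrite inE => /andP [/eqP H1 HP] ->.
    by rewrite /psi HP andbT -H1; exact: (valP e).
  - move=> /andP [ut Pu].
    have Hlt : ((u, inord t : 'I_N.+1).1 < (u, inord t : 'I_N.+1).2)%N.
      by rewrite /= inordK //; lia.
    exists (Sub (u, inord t) Hlt); last by rewrite /psi SubK.
    by rewrite inE SubK /= inordK ?eqxx //; lia.
rewrite -sum1_card big_mkcond /=.
rewrite (big_ord_widen N.+1 (fun u => (P u : nat))) //; last by lia.
by rewrite [RHS]big_mkcond; apply: eq_bigr => u _; rewrite inE; case: (u < t)%N; case: (P u).
Qed.

Lemma Ex_noinc (R : realFieldType) (p : R) N t (P : pred nat) : (0 < t <= N)%N ->
  Ex p (fun c : {ffun edge N.+1 -> bool} =>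
          ((~~ [exists u : 'I_t, P u && (Wn c u t == 1%N)]))%:R) =
  (1 - p) ^+ (\sum_(u < t) P u)%N.
Proof.
move=> Ht; have /andP [t0 tN] := Ht.
pose Q := fun e : edge N.+1 => (((val e).2 : nat) == t) && P (val e).1.
rewrite (Ex_ext p (G := fun c => \prod_e ((~~ (Q e && c e))%:R : R))); last first.
  move=> c; rewrite prod_bool -negb_exists; congr ((~~ _)%:R).
  apply/existsP/existsP => [[u /andP [Pu /eqP Hw]]|[e /andP [/andP [/eqP He Pe] ce]]].
  - have [e Ev ce] := ewt_one Hw.
    exists e; rewrite /Q Ev /= ce !inordK ?eqxx ?Pu //; have := ltn_ord u; lia.
  - have Hu : ((val e).1 < t)%N by rewrite -He; exact: (valP e).
    exists (Ordinal Hu); rewrite /= Pe /= /Wn.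
    have -> : inord t = (val e).2 by rewrite -He inord_val.
    by rewrite inord_val ewt_edge ce.
rewrite (Ex_prod p (fun e b => ((~~ (Q e && b))%:R : R))).
rewrite (eq_bigr (fun e => if Q e then 1 - p else 1)); last first.
  by move=> e _; case: (Q e) => /=; ring.
by rewrite -big_mkcond prodr_const card_Q.
Qed.

Lemma D_merge N v (w c : {ffun edge N.+1 -> bool}) u : (u <= v)%N -> (v < N)%N ->
  D (Wn (mrg (At N v.+1) w c)) u = D (Wn w) u.
Proof.
move=> uv vN; apply: D_local => a b Hb.
rewrite Wn_merge; last by lia.
by have -> : (b == v.+1) = false by apply/negbTE; lia.
Qed.

Lemma Lp_merge N v (w c : {ffun edge N.+1 -> bool}) : (v < N)%N ->
  Lp (Wn (mrg (At N v.+1) w c)) v = Lp (Wn w) v.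
Proof.
move=> vN; rewrite /Lp; apply: eq_bigr => u _.
by rewrite !D_merge // -ltnS.
Qed.

Lemma inc_merge N v (w c : {ffun edge N.+1 -> bool}) : (v < N)%N ->
  inc (Wn (mrg (At N v.+1) w c)) v =
  [exists u : 'I_v.+1, (D (Wn w) u == D (Wn w) v) && (Wn c u v.+1 == 1%N)].
Proof.
move=> vN; rewrite /inc; apply: eq_existsb => u.
rewrite !D_merge // ?Wn_merge ?eqxx //; last by rewrite -ltnS.
Qed.

Lemma key_noinc (R : realFieldType) (p : R) N v l : (v < N)%N ->
  Ex p (fun w : {ffun edge N.+1 -> bool} => ((Lp (Wn w) v == l) && ~~ inc (Wn w) v)%:R) =
  (1 - p) ^+ l * Ex p (fun w : {ffun edge N.+1 -> bool} => ((Lp (Wn w) v == l))%:R).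
Proof.
move=> vN; rewrite (Ex_merge p (At N v.+1)) -Ex_scale; apply: Ex_ext => w.
rewrite (Ex_ext p (G := fun c => (Lp (Wn w) v == l)%:R *
   ((~~ [exists u : 'I_v.+1, (fun u => D (Wn w) u == D (Wn w) v) u && (Wn c u v.+1 == 1%N)]))%:R)); last first.
  by move=> c; rewrite Lp_merge // inc_merge //; case: (_ == l); rewrite ?mul1r ?mul0r.
rewrite Ex_scale (@Ex_noinc R p N v.+1 (fun u => D (Wn w) u == D (Wn w) v)); last by lia.
by case: eqP => [<-|_]; rewrite /= ?mul1r ?mulr1 ?mulr0 ?mul0r.
Qed.

Lemma key_inc (R : realFieldType) (p : R) N v l : (v < N)%N ->
  Ex p (fun w : {ffun edge N.+1 -> bool} => ((Lp (Wn w) v == l) && inc (Wn w) v)%:R) =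
  (1 - (1 - p) ^+ l) * Ex p (fun w : {ffun edge N.+1 -> bool} => ((Lp (Wn w) v == l))%:R).
Proof.
move=> vN; rewrite mulrBl mul1r -key_noinc //.
have -> : Ex p (fun w : {ffun edge N.+1 -> bool} => ((Lp (Wn w) v == l))%:R) =
   Ex p (fun w : {ffun edge N.+1 -> bool} => ((Lp (Wn w) v == l) && inc (Wn w) v)%:R) +
   Ex p (fun w : {ffun edge N.+1 -> bool} => ((Lp (Wn w) v == l) && ~~ inc (Wn w) v)%:R).
  by rewrite -Ex_add; apply: Ex_ext => w; case: (_ == l); case: inc; rewrite /= ?addr0 ?add0r.
by rewrite addrK.
Qed.

Definition Pv (R : realFieldType) (p : R) N v l :=
  Ex p (fun w : {ffun edge N.+1 -> bool} => ((Lp (Wn w) v == l))%:R).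

Lemma Pv0 (R : realFieldType) (p : R) N l : Pv p N 0 l = (l == 1%N)%:R.
Proof.
rewrite /Pv -[RHS](@Ex_const R p (edge N.+1)); apply: Ex_ext => w.
by rewrite /Lp big_ord1 eqxx eq_sym.
Qed.

Lemma Pv_l0 (R : realFieldType) (p : R) N v : Pv p N v 0 = 0.
Proof.
rewrite /Pv -[RHS](@Ex_const R p (edge N.+1)); apply: Ex_ext => w.
by have := Lp_ge1 (Wn w) v; case: (Lp _ _).
Qed.

Lemma inc_Lp N (w : {ffun edge N.+1 -> bool}) v : (Lp (Wn w) v.+1 == 1%N) = inc (Wn w) v.
Proof.
rewrite Lp_inc; last exact: Wn_le1.
by case: inc => //=; have := Lp_ge1 (Wn w) v; case: (Lp _ _).
Qed.

Lemma Pv_SS (R : realFieldType) (p : R) N v l : (v < N)%N ->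
  Pv p N v.+1 l.+2 = (1 - p) ^+ l.+1 * Pv p N v l.+1.
Proof.
move=> vN; rewrite /Pv -key_noinc //; apply: Ex_ext => w.
rewrite Lp_inc; last exact: Wn_le1.
by case: inc; rewrite ?andbF ?andbT.
Qed.

Lemma Pv_S1 (R : realFieldType) (p : R) N v : (v < N)%N ->
  Pv p N v.+1 1 = \sum_(l < v.+2) (1 - (1 - p) ^+ l) * Pv p N v l.
Proof.
move=> vN.
under eq_bigr do rewrite -key_inc //.
rewrite -Ex_sum /Pv; apply: Ex_ext => w.
rewrite inc_Lp.
have HL : (Lp (Wn w) v < v.+2)%N by rewrite ltnS Lp_le.
rewrite (bigD1 (Ordinal HL)) //= eqxx /= big1 ?addr0 // => i Hi.
case: eqP => // E; move: Hi; rewrite -(inj_eq val_inj) /= E eqxx //.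
Qed.

Lemma ED_S (R : realFieldType) (p : R) N v : (v < N)%N ->
  Ex p (fun w : {ffun edge N.+1 -> bool} => (D (Wn w) v.+1)%:R) =
  Ex p (fun w : {ffun edge N.+1 -> bool} => (D (Wn w) v)%:R) + Pv p N v.+1 1.
Proof.
move=> vN; rewrite /Pv -Ex_add; apply: Ex_ext => w.
by rewrite D_inc ?natrD ?inc_Lp //; exact: Wn_le1.
Qed.

End PartF.
Import PartF.

Module PartG.
Set Implicit Arguments. Unset Strict Implicit. Unset Printing Implicit Defensive.
Import Order.TTheory GRing.Theory Num.Theory.
Local Open Scope ring_scope.

Lemma binSS2 l : 'C(l.+2, 2) = ('C(l.+1, 2) + l.+1)%N.
Proof. by rewrite binS bin1. Qed.

Lemma Pv_closed (R : realFieldType) (p : R) N v : (v <= N)%N -> forall l,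
  Pv p N v l = if (0 < l <= v.+1)%N then Pv p N (v.+1 - l) 1 * (1 - p) ^+ 'C(l, 2) else 0.
Proof.
elim: v => [|v IH] vN [|[|l]] //=; rewrite ?Pv_l0 ?subn1 ?mulr1 //.
- by rewrite Pv0.
- rewrite Pv_SS // IH ?(ltnW vN) //=.
  rewrite !ltnS subSS; case: ifP => _; last by rewrite mulr0.
  by rewrite binSS2 exprD; ring.
Qed.

Lemma r_rec (R : realFieldType) (p : R) N v : (v < N)%N ->
  Pv p N v.+1 1 = \sum_(l < v.+1) Pv p N (v - l) 1 * (Bcoef p l - Bcoef p l.+1).
Proof.
move=> vN; rewrite Pv_S1 // big_ord_recl expr0 subrr mul0r add0r.
apply: eq_bigr => i _.
rewrite (Pv_closed p (ltnW vN)) ltnS ltn_ord /= subSS.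
rewrite /Bcoef binSS2 exprD; ring.
Qed.

Definition Hs (R : realFieldType) (h : nat -> R) (k : nat) := \sum_(m < k.+1) h m.

Lemma SH (R : realFieldType) (p : R) h : is_inverse_series (Bcoef p) h ->
  forall m, \sum_(k < m.+1) Bcoef p k * Hs h (m - k) = 1.
Proof.
move=> Hi; elim=> [|m IH].
  by have := Hi 0%N; rewrite !big_ord1 /Hs big_ord1.
rewrite big_ord_recr /= subnn.
have -> : Hs h 0 = h 0%N by rewrite /Hs big_ord1.
rewrite (eq_bigr (fun k : 'I_m.+1 => Bcoef p k * Hs h (m - k) + Bcoef p k * h (m.+1 - k)%N)); last first.
  move=> k _; rewrite -mulrDr /Hs subSn; last by have := ltn_ord k; lia.
  by rewrite big_ord_recr.
rewrite big_split /= IH -addrA.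
have := Hi m.+1; rewrite big_ord_recr /= subnn => ->.
by rewrite addr0.
Qed.

Lemma H_rec (R : realFieldType) (p : R) h : is_inverse_series (Bcoef p) h ->
  forall v, Hs h v.+1 = \sum_(l < v.+1) Hs h (v - l) * (Bcoef p l - Bcoef p l.+1).
Proof.
move=> Hi v.
under eq_bigr do rewrite mulrBr.
rewrite sumrB.
have E1 := SH Hi v.
have E2 := SH Hi v.+1.
rewrite big_ord_recl Bcoef0 mul1r subn0 in E2.
have -> : \sum_(i < v.+1) Hs h (v - i) * Bcoef p i = 1.
  by rewrite -E1; apply: eq_bigr => i _; rewrite mulrC.
have -> : \sum_(i < v.+1) Hs h (v - i) * Bcoef p i.+1 = 1 - Hs h v.+1.
  rewrite -E2 (addrC (Hs h v.+1)) addrK; apply: eq_bigr => i _; rewrite mulrC.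
  by [].
by rewrite opprB addrC subrK.
Qed.

Lemma r_H (R : realFieldType) (p : R) h N : is_inverse_series (Bcoef p) h ->
  forall k, (k <= N)%N -> Pv p N k 1 = Hs h k.
Proof.
move=> Hi; elim/ltn_ind => -[|k] IH kN.
  have := Hi 0%N; rewrite big_ord1 Bcoef0 mul1r /Hs big_ord1 => ->.
  by rewrite Pv0.
rewrite r_rec // (H_rec Hi); apply: eq_bigr => i _.
by rewrite IH //; have := ltn_ord i; lia.
Qed.

Lemma ED (R : realFieldType) (p : R) N v : (v <= N)%N ->
  Ex p (fun w : {ffun edge N.+1 -> bool} => (D (Wn w) v)%:R) = \sum_(k < v) Pv p N k.+1 1.
Proof.
elim: v => [|v IH] vN.
  by rewrite big_ord0 (Ex_ext p (G := fun _ => 0)) ?Ex_const.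
by rewrite ED_S // IH ?(ltnW vN) // big_ord_recr.
Qed.

Lemma gfun_H (R : realFieldType) (p : R) h N : is_inverse_series (Bcoef p) h ->
  gfun p N.+1 = \sum_(k < N.+1) Hs h k.
Proof.
move=> Hi; rewrite /gfun.
have -> : EXn p N.+1 = Ex p (fun w : {ffun edge N.+1 -> bool} => (Xn w)%:R) by [].
rewrite (Ex_ext p (G := fun w => (D (Wn w) N)%:R)); last by move=> w; rewrite Xn_D.
rewrite ED // big_ord_recl.
rewrite -(@r_H R p h N Hi 0 (leq0n N)) Pv0 /=; congr (_ + _).
by apply: eq_bigr => i _; rewrite (@r_H R p h N Hi) //; have := ltn_ord i; rewrite /bump /=; lia.
Qed.

Lemma sum_Hs (R : realFieldType) (h : nat -> R) n :
  \sum_(k < n) Hs h k = \sum_(m < n) (n - m)%:R * h m.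
Proof.
elim: n => [|n IH]; first by rewrite !big_ord0.
rewrite big_ord_recr IH /= [RHS]big_ord_recr /= /Hs big_ord_recr /= addrA -big_split /=.
rewrite subSn // subnn mul1r; congr (_ + _).
apply: eq_bigr => i _; rewrite subSn; last by have := ltn_ord i; lia.
by rewrite -addn1 natrD mulrDl mul1r.
Qed.

End PartG.
Import PartG.

Import Order.TTheory GRing.Theory Num.Theory.
Local Open Scope ring_scope.

Theorem corollary4 (R : realFieldType) (p : R) (h : nat -> R)
  (hp0 : 0 < p) (hp1 : p < 1)
  (hinv : is_inverse_series (Bcoef p) h) :
  (forall n : nat, (1 <= n)%N ->
     h n = \sum_(1 <= j < n.+1) (-1) ^+ j * compW p n j) /\
  (forall n : nat, (1 <= n)%N ->
     [/\ gfun p n = \sum_(m < n) (n - m)%:R * h m,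
         gfun p n = \sum_(m < n) (n - m)%:R * compSum p m &
         gfun p n = \sum_(m < n) \sum_(j < m.+1) \sum_(k < j.+1)
                       (-1) ^+ k * compW p j k]).
Proof.
split.
- move=> n n1; rewrite (@h_compSum R p h hinv n) /compSum.
  rewrite -(big_mkord xpredT (fun i => (-1) ^+ i * compW p n i)) big_ltn //.
  by rewrite compW_cw /= ; case: n n1 => // n _; rewrite mulr0 add0r.
- case=> // N _; have G := @gfun_H R p h N hinv; split.
  + by rewrite G sum_Hs.
  + rewrite G sum_Hs; apply: eq_bigr => m _; by rewrite (@h_compSum R p h hinv).
  + rewrite G; apply: eq_bigr => m _; rewrite /Hs; apply: eq_bigr => j _.
    by rewrite (@h_compSum R p h hinv).
Qed.
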